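(* A graph $G$ is $\gamma\gamma_{\rm cer}$-perfect if and only if $G$ is $P_4$-free.
   Context: All graphs are finite and simple. A graph is $P_4$-free if it has no induced subgraph isomorphic to the path $P_4$ on four vertices. A set $D\subseteq V_G$ is a dominating set of $G$ if every vertex of $V_G-D$ has a neighbor in $D$; $\gamma(G)$ is the minimum cardinality of a dominating set. A set $D\subseteq V_G$ is a certified dominating set of $G$ if $D$ is a dominating set of $G$ and every vertex of $D$ has either zero or at least two neighbors in $V_G-D$; $\gamma_{\rm cer}(G)$ is the minimum cardinality of a certified dominating set of $G$. A graph $G$ is $\gamma\gamma_{\rm cer}$-perfect if $\gamma(H)=\gamma_{\rm cer}(H)$ for every induced connected subgraph $H$ of $G$ with $H\neq K_2$. *)

(* Defs.v *)
(* A finite simple graph G is a finType T of vertices with a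
   symmetric irreflexive adjacency relation e. Induced subgraphs of G are
   given by their vertex sets S : {set T}. *)
From mathcomp Require Import all_boot.
Set Implicit Arguments. Unset Strict Implicit. Unset Printing Implicit Defensive.

Section Graphs.
Variables (T : finType) (e : rel T).

Definition dominating (S D : {set T}) : bool :=
  (D \subset S) && [forall v in S :\: D, [exists u in D, e v u]].

Definition ndeg (A : {set T}) (v : T) : nat := #|[set u in A | e v u]|.

Definition certified_dominating (S D : {set T}) : bool :=
  dominating S D &&
  [forall v in D, (ndeg (S :\: D) v == 0) || (1 < ndeg (S :\: D) v)].

Lemma dominating_exists (S : {set T}) :
  exists n, [exists D : {set T}, dominating S D && (#|D| == n)].
Proof.
exists #|S|; apply/existsP; exists S; rewrite eqxx andbT /dominating subxx /=.
by apply/forallP => v; rewrite setDv inE.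
Qed.

Lemma certified_dominating_exists (S : {set T}) :
  exists n, [exists D : {set T}, certified_dominating S D && (#|D| == n)].
Proof.
exists #|S|; apply/existsP; exists S; rewrite eqxx andbT /certified_dominating.
rewrite /dominating subxx /=; apply/andP; split.
  by apply/forallP => v; rewrite setDv inE.
apply/forallP => v; apply/implyP => _.
by rewrite /ndeg setDv (_ : [set u in set0 | e v u] = set0) ?cards0 //;
  apply/setP => u; rewrite !inE.
Qed.

Definition gamma (S : {set T}) : nat := ex_minn (dominating_exists S).
Definition gamma_cer (S : {set T}) : nat :=
  ex_minn (certified_dominating_exists S).

Definition induced_connected (S : {set T}) : Prop :=
  S != set0 /\
  {in S &, forall x y, connect (fun a b => [&& a \in S, b \in S & e a b]) x y}.

Definition is_K2 (S : {set T}) : Prop :=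
  exists x y, [/\ x != y, S = [set x; y] & e x y].

Definition gamma_gammacer_perfect : Prop :=
  forall S : {set T}, induced_connected S -> ~ is_K2 S -> gamma S = gamma_cer S.

Definition P4_free : Prop :=
  ~ exists a b c d : T,
      [/\ uniq [:: a; b; c; d],
          [&& e a b, e b c & e c d] &
          [&& ~~ e a c, ~~ e a d & ~~ e b d]].

End Graphs.

(* Main.v *)
Require Import Defs.
From mathcomp Require Import all_boot.
Set Implicit Arguments. Unset Strict Implicit. Unset Printing Implicit Defensive.

Section Proofs.
Variables (T : finType) (e : rel T).
Hypothesis e_sym : symmetric e.
Hypothesis e_irr : irreflexive e.

Lemma gamma_spec S : exists D, dominating e S D /\ #|D| = gamma e S.
Proof.
rewrite /gamma; case: ex_minnP => m /existsP[D /andP[HD /eqP HC]] _.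
by exists D.
Qed.

Lemma gamma_le S D : dominating e S D -> gamma e S <= #|D|.
Proof.
move=> HD; rewrite /gamma; case: ex_minnP => m _ H; apply: H.
by apply/existsP; exists D; rewrite HD eqxx.
Qed.

Lemma gamma_cer_spec S : exists D, certified_dominating e S D /\ #|D| = gamma_cer e S.
Proof.
rewrite /gamma_cer; case: ex_minnP => m /existsP[D /andP[HD /eqP HC]] _.
by exists D.
Qed.

Lemma gamma_cer_le S D : certified_dominating e S D -> gamma_cer e S <= #|D|.
Proof.
move=> HD; rewrite /gamma_cer; case: ex_minnP => m _ H; apply: H.
by apply/existsP; exists D; rewrite HD eqxx.
Qed.

Lemma gamma_le_cer S : gamma e S <= gamma_cer e S.
Proof.
have [D [/andP[HD _] <-]] := gamma_cer_spec S; exact: gamma_le.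
Qed.

Lemma gamma_ge1 S : S != set0 -> 0 < gamma e S.
Proof.
move=> /set0Pn[v Hv]; have [D [/andP[_ /forallP HD] <-]] := gamma_spec S.
rewrite card_gt0; apply/set0Pn.
case Hvd: (v \in D); first by exists v.
have := HD v; rewrite !inE Hvd Hv /= => /existsP[u /andP[Hu _]]; by exists u.
Qed.

Definition domv (S : {set T}) w := w \in S /\ forall u, u \in S -> u != w -> e w u.

Lemma gamma_ge2 S : S != set0 -> (forall w, ~ domv S w) -> 1 < gamma e S.
Proof.
move=> Sn Hw; have := gamma_ge1 Sn.
have [D [/andP[HDS /forallP HD] HC]] := gamma_spec S.
rewrite -HC => H0; rewrite ltnNge; apply/negP => H1.
have /cards1P[w Dw] : #|D| == 1 by rewrite eqn_leq H1 H0.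
apply: (Hw w); split.
  by move/subsetP: HDS; apply; rewrite Dw set11.
move=> u Hu Huw; subst D; have := HD u; rewrite !inE Huw Hu /= => /existsP[x].
by rewrite inE => /andP[/eqP-> ]; rewrite e_sym.
Qed.


Definition nP4 := forall a b c d, e a b -> e b c -> e c d ->
  ~~ e a c -> ~~ e a d -> ~~ e b d -> False.

Definition split_dis (S X : {set T}) :=
  [/\ X \subset S, X != set0, X != S &
      forall x y, x \in X -> y \in S :\: X -> ~~ e x y].
Definition split_co (S X : {set T}) :=
  [/\ X \subset S, X != set0, X != S &
      forall x y, x \in X -> y \in S :\: X -> e x y].


Lemma split_sym_gen (P : T -> T -> bool) (S X : {set T}) :
  (forall x y, P x y = P y x) ->
  [/\ X \subset S, X != set0, X != S & forall x y, x \in X -> y \in S :\: X -> P x y] ->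
  [/\ S :\: X \subset S, S :\: X != set0, S :\: X != S &
      forall x y, x \in S :\: X -> y \in S :\: (S :\: X) -> P x y].
Proof.
move=> Psym [XS X0 XNS HX]; split.
- exact: subsetDl.
- have : ~~ (S \subset X) by move: XNS; rewrite eqEsubset XS.
  by case/subsetPn => u uS uX; apply/set0Pn; exists u; rewrite inE uX.
- case/set0Pn: X0 => x xX; apply/eqP => E.
  by move: (subsetP XS x xX); rewrite -E inE xX.
- move=> x y; rewrite !inE => /andP[xX xS] /andP[H yS]; move: H; rewrite yS andbT negbK => yX.
  by rewrite Psym; apply: HX; rewrite // inE xX.
Qed.

Lemma split_dis_sym S X : split_dis S X -> split_dis S (S :\: X).
Proof. by move=> H; apply: (split_sym_gen (P := fun x y => ~~ e x y)) => // x y; rewrite e_sym. Qed.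
Lemma split_co_sym S X : split_co S X -> split_co S (S :\: X).
Proof. by move=> H; apply: (split_sym_gen (P := e)). Qed.


Lemma extend_gen (P : T -> T -> bool) (S X : {set T}) v :
  (forall x y, P x y = P y x) -> v \in S ->
  [/\ X \subset S :\ v, X != set0, X != S :\ v &
      forall x y, x \in X -> y \in (S :\ v) :\: X -> P x y] ->
  (forall x, x \in X -> P x v) ->
  [/\ X \subset S, X != set0, X != S & forall x y, x \in X -> y \in S :\: X -> P x y].
Proof.
move=> Psym vS [XS' X0 XNS HX] Hv.
have XS : X \subset S by apply: subset_trans XS' (subD1set _ _).
have vX : v \notin X by apply/negP => /(subsetP XS'); rewrite !inE eqxx.
split => //.
- by apply/eqP => E; move: vX; rewrite E vS.
- move=> x y xX; rewrite !inE => /andP[yX yS]; case: (eqVneq y v) => [->|yv].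
    exact: Hv.
  by apply: HX; rewrite // !inE yX yv yS.
Qed.

Lemma caseA (HP : nP4) (S X : {set T}) v z0 x1 y1 :
  v \in S -> split_dis (S :\ v) X -> x1 \in X -> e v x1 ->
  y1 \in (S :\ v) :\: X -> e v y1 -> z0 \in S :\ v -> ~~ e v z0 ->
  split_dis S [set u in S :\ v | ~~ e v u].
Proof.
move=> vS [XS' X0 XNS HX] x1X vx1 y1Y vy1 z0S vz0; split.
- by apply/subsetP => u; rewrite !inE => /andP[/andP[]].
- by apply/set0Pn; exists z0; rewrite inE z0S.
- by apply/eqP => E; move: vS; rewrite -E !inE eqxx.
- move=> z y; rewrite !inE => /andP[/andP[zv zS] vz] /andP[Hy yS].
  case: (eqVneq y v) => [->|yv]; first by rewrite e_sym.
  move: Hy; rewrite yv yS /= negbK => vy.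
  have yS' : y \in S :\ v by rewrite !inE yv yS.
  have zS' : z \in S :\ v by rewrite !inE zv zS.
  apply/negP => zy.
  move: y1Y; rewrite inE => /andP[y1X y1S'].
  case: (boolP (z \in X)) => zX.
    have yX : y \in X.
      apply/negPn/negP => yX.
      by move: (HX z y zX); rewrite inE yX yS' zy => /(_ isT).
    apply: (HP z y v y1 zy _ vy1); first by rewrite e_sym.
    + by rewrite e_sym.
    + by apply: HX; rewrite // inE y1X.
    + by apply: HX; rewrite // inE y1X.
  have yX : y \notin X.
    apply/negP => yX.
    by move: (HX y z yX); rewrite inE zX zS' e_sym zy => /(_ isT).
  apply: (HP z y v x1 zy _ vx1); first by rewrite e_sym.
  + by rewrite e_sym.
  + by rewrite e_sym; apply: HX; rewrite // inE zX.
  + by rewrite e_sym; apply: HX; rewrite // inE yX.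
Qed.

Lemma caseB (HP : nP4) (S X : {set T}) v n0 x1 y1 :
  v \in S -> split_co (S :\ v) X -> x1 \in X -> ~~ e v x1 ->
  y1 \in (S :\ v) :\: X -> ~~ e v y1 -> n0 \in S :\ v -> e v n0 ->
  split_co S [set u in S :\ v | e v u].
Proof.
move=> vS [XS' X0 XNS HX] x1X vx1 y1Y vy1 n0S vn0; split.
- by apply/subsetP => u; rewrite !inE => /andP[/andP[]].
- by apply/set0Pn; exists n0; rewrite inE n0S.
- by apply/eqP => E; move: vS; rewrite -E !inE eqxx.
- move=> n y; rewrite !inE => /andP[/andP[nv nS] vn] /andP[Hy yS].
  case: (eqVneq y v) => [->|yv]; first by rewrite e_sym.
  move: Hy; rewrite yv yS /= => vy.
  have yS' : y \in S :\ v by rewrite !inE yv yS.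
  have nS' : n \in S :\ v by rewrite !inE nv nS.
  apply/negPn/negP => ny.
  move: y1Y; rewrite inE => /andP[y1X y1S'].
  case: (boolP (y \in X)) => yX.
    have nX : n \in X.
      apply/negPn/negP => nX.
      by move: (HX y n yX); rewrite inE nX nS' e_sym (negbTE ny) => /(_ isT).
    apply: (HP v n y1 y vn _ _ vy1 vy ny).
    + by apply: HX; rewrite // inE y1X.
    + by rewrite e_sym; apply: HX; rewrite // inE y1X.
  have nX : n \notin X.
    apply/negP => nX.
    by move: (HX n y nX); rewrite inE yX yS' (negbTE ny) => /(_ isT).
  apply: (HP v n x1 y vn _ _ vx1 vy ny).
  + by rewrite e_sym; apply: HX; rewrite // inE nX.
  + by apply: HX; rewrite // inE yX.
Qed.


Lemma decomp (HP : nP4) n (S : {set T}) : #|S| <= n -> 1 < #|S| ->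
  (exists X, split_dis S X) \/ (exists X, split_co S X).
Proof.
elim: n S => [|n IH] S; first by rewrite leqn0 => /eqP->.
move=> Hn H2; have [v Hv] : exists v, v \in S by apply/card_gt0P; apply: ltnW.
have vS : [set v] \subset S by rewrite sub1set.
have v0 : [set v] != set0 by apply/set0Pn; exists v; rewrite set11.
have vNS : [set v] != S by apply/eqP => E; move: H2; rewrite -E cards1.
case: (boolP [exists u in S :\ v, ~~ e v u]) => [/exists_inP[z0 z0S vz0]|/exists_inPn Hall]; last first.
  right; exists [set v]; split => // x y; rewrite !inE => /eqP-> /andP[yv yS].
  by apply/negPn/Hall; rewrite !inE yv.
case: (boolP [exists u in S :\ v, e v u]) => [/exists_inP[n0 n0S vn0]|/exists_inPn Hnone]; last first.
  left; exists [set v]; split => // x y; rewrite !inE => /eqP-> /andP[yv yS].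
  by apply/Hnone; rewrite !inE yv.
have Hn' : #|S :\ v| <= n by move: Hn; rewrite (cardsD1 v S) Hv.
have H2' : 1 < #|S :\ v|.
  have nz : n0 != z0 by apply/eqP => E; move: vz0; rewrite -E vn0.
  have : [set n0; z0] \subset S :\ v by rewrite subUset !sub1set n0S z0S.
  by move/subset_leq_card; rewrite cards2 nz.
case: (IH _ Hn' H2') => [[X HXs]|[X HXs]].
- have HYs := split_dis_sym HXs.
  case: HXs => XS' X0 XNS HX.
  case: (boolP [exists x in X, e v x]) => [/exists_inP[x1 x1X vx1]|/exists_inPn noX].
    case: (boolP [exists y in S :\ v :\: X, e v y]) => [/exists_inP[y1 y1Y vy1]|/exists_inPn noY].
      by left; eexists; apply: (caseA HP Hv _ x1X vx1 y1Y vy1 z0S vz0).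
    left; exists (S :\ v :\: X).
    apply: (extend_gen (P := fun x y => ~~ e x y) (v := v)) => //.
      by move=> x y; rewrite e_sym.
    by move=> x /noY; rewrite e_sym.
  left; exists X.
  apply: (extend_gen (P := fun x y => ~~ e x y) (v := v)) => //.
    by move=> x y; rewrite e_sym.
  by move=> x /noX; rewrite e_sym.
- have HYs := split_co_sym HXs.
  case: HXs => XS' X0 XNS HX.
  case: (boolP [exists x in X, ~~ e v x]) => [/exists_inP[x1 x1X vx1]|/exists_inPn noX].
    case: (boolP [exists y in S :\ v :\: X, ~~ e v y]) => [/exists_inP[y1 y1Y vy1]|/exists_inPn noY].
      by right; eexists; apply: (caseB HP Hv _ x1X vx1 y1Y vy1 n0S vn0).
    right; exists (S :\ v :\: X).
    apply: (extend_gen (P := e) (v := v)) => //.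
    by move=> x /noY; rewrite e_sym negbK.
  right; exists X.
  apply: (extend_gen (P := e) (v := v)) => //.
  by move=> x /noX; rewrite e_sym negbK.
Qed.


Lemma ndeg_ge (Y A : {set T}) u : Y \subset [set w in A | e u w] -> #|Y| <= ndeg e A u.
Proof. exact: subset_leq_card. Qed.

Lemma cert_self S : certified_dominating e S S.
Proof.
apply/andP; split; first by apply/andP; split; [exact: subxx | apply/forall_inP => x; rewrite setDv inE].
apply/forall_inP => u _; apply/orP; left; rewrite /ndeg setDv.
by rewrite cards_eq0; apply/eqP/setP => w; rewrite !inE.
Qed.

Lemma certB S X : split_co S X -> 2 <= #|X| -> certified_dominating e S (S :\: X).
Proof.
move=> [XS X0 XNS HX] H2.
have [b bD] : exists b, b \in S :\: X.
  have : ~~ (S \subset X) by move: XNS; rewrite eqEsubset XS.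
  by case/subsetPn => u uS uX; exists u; rewrite inE uX.
apply/andP; split; [apply/andP; split|].
- exact: subsetDl.
- apply/forall_inP => x; rewrite !inE => /andP[H xS]; move: H; rewrite xS andbT negbK => xX.
  by apply/exists_inP; exists b => //; apply: HX.
- apply/forall_inP => u uD; apply/orP; right.
  apply: leq_trans H2 (ndeg_ge _); apply/subsetP => w wX.
  have wS := subsetP XS w wX.
  move: uD; rewrite !inE wX wS /= => /andP[uX uS].
  by rewrite e_sym; apply: HX; rewrite // inE uX.
Qed.

Lemma certAB S X : split_co S X -> 3 <= #|X| -> 3 <= #|S :\: X| ->
  exists D, certified_dominating e S D /\ #|D| <= 2.
Proof.
move=> [XS X0 XNS HX] HA HB.
have [a aX] : exists a, a \in X by apply/card_gt0P; apply: leq_trans HA.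
have [b bY] : exists b, b \in S :\: X by apply/card_gt0P; apply: leq_trans HB.
have aS := subsetP XS a aX.
move: (bY); rewrite inE => /andP[bX bS].
have ab : a != b by apply/eqP => E; move: bX; rewrite -E aX.
exists [set a; b]; split; last by rewrite cards2 ab.
apply/andP; split; [apply/andP; split|].
- by rewrite subUset !sub1set aS bS.
- apply/forall_inP => x; rewrite !inE => /andP[H xS].
  case: (boolP (x \in X)) => xX.
    by apply/exists_inP; exists b; rewrite ?inE ?eqxx ?orbT // HX // inE bX bS.
  apply/exists_inP; exists a; first by rewrite !inE eqxx.
  by rewrite e_sym; apply: HX; rewrite // inE xX xS.
- apply/forall_inP => u; rewrite !inE => /orP[/eqP->|/eqP->]; apply/orP; right.
  + apply: (leq_trans (_ : 2 <= #|(S :\: X) :\ b|)); first by move: HB; rewrite (cardsD1 b) bY.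
    apply: ndeg_ge; apply/subsetP => w.
    rewrite !inE => /andP[wb /andP[wX wS]].
    have wa : w != a by apply/eqP => E; move: wX; rewrite E aX.
    by rewrite (negbTE wa) (negbTE wb) wS /=; apply: HX; rewrite // inE wX wS.
  + apply: (leq_trans (_ : 2 <= #|X :\ a|)); first by move: HA; rewrite (cardsD1 a) aX.
    apply: ndeg_ge; apply/subsetP => w.
    rewrite !inE => /andP[wa wX].
    have wS := subsetP XS w wX.
    have wb : w != b by apply/eqP => E; move: bX; rewrite -E wX.
    by rewrite (negbTE wa) (negbTE wb) wS /= e_sym; apply: HX.
Qed.

Lemma split_co_big S X : split_co S X -> (forall w, ~ domv S w) -> 2 <= #|X|.
Proof.
move=> [XS X0 XNS HX] Hw; rewrite ltnNge; apply/negP => H1.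
have /cards1P[a Xa] : #|X| == 1 by rewrite eqn_leq H1 card_gt0.
apply: (Hw a); split; first by apply: (subsetP XS); rewrite Xa set11.
move=> u uS ua; apply: HX; first by rewrite Xa set11.
by rewrite inE Xa inE ua uS.
Qed.


Lemma perfect_of (HP : nP4) : gamma_gammacer_perfect e.
Proof.
move=> S [S0 Sconn] NK2; apply/eqP; rewrite eqn_leq gamma_le_cer /=.
have g1 := gamma_ge1 S0.
case: (leqP #|S| 1) => HS.
  exact: leq_trans (gamma_cer_le (cert_self S)) (leq_trans HS g1).
case: (decomp HP (leqnn _) HS) => [[X HXs]|[X HXs]].
- exfalso.
  have [[_ Y0 _ _] [XS X0 XNS HX]] := (split_dis_sym HXs, HXs).
  have [y yY] := set0Pn _ Y0; have [x xX] := set0Pn _ X0.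
  have xS := subsetP XS x xX.
  move: (yY); rewrite inE => /andP[yX yS].
  have cl : closed (fun a b => [&& a \in S, b \in S & e a b]) X.
    move=> a b /and3P[aS bS ab]; apply/idP/idP => H.
      by apply: contraT => bX; have := HX a b H; rewrite inE bX bS ab => /(_ isT).
    by apply: contraT => aX; have := HX b a H; rewrite inE aX aS e_sym ab => /(_ isT).
  by move: (closed_connect cl (Sconn x y xS yS)); rewrite xX (negbTE yX).
case: (boolP [exists w in S, [forall u in S, (u != w) ==> e w u]]).
  case/exists_inP => w wS /forall_inP Hw.
  have Hw' u : u \in S -> u != w -> e w u by move=> uS uw; move: (Hw u uS); rewrite uw.
  case: (eqVneq #|S| 2) => H2.
    exfalso; apply: NK2.
    have : #|S :\ w| == 1 by move: H2; rewrite (cardsD1 w S) wS add1n => -[->].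
    case/cards1P => x Ex.
    have xS' : x \in S :\ w by rewrite Ex set11.
    move: (xS'); rewrite !inE => /andP[xw xS].
    exists w, x; split; first by rewrite eq_sym.
      apply/setP => u; rewrite !inE; case: (eqVneq u w) => [->|uw] /=; first by rewrite wS.
      have : (u \in S :\ w) = (u \in [set x]) by rewrite Ex.
      by rewrite !inE uw.
    exact: Hw'.
  have H3 : 2 < #|S| by rewrite ltn_neqAle eq_sym H2.
  apply: leq_trans g1; apply: (@leq_trans #|[set w]|); last by rewrite cards1.
  apply: gamma_cer_le; apply/andP; split; [apply/andP; split|].
  + by rewrite sub1set.
  + apply/forall_inP => x; rewrite !inE => /andP[xw xS]; apply/exists_inP; exists w.
      by rewrite set11.
    by rewrite e_sym; apply: Hw'.
  + apply/forall_inP => u0; rewrite inE => /eqP->; apply/orP; right.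
    apply: (leq_trans (_ : 2 <= #|S :\ w|)); first by move: H3; rewrite (cardsD1 w S) wS.
    apply: ndeg_ge; apply/subsetP => u; rewrite !inE => /andP[uw uS].
    by rewrite uw uS /=; apply: Hw'.
move/exists_inPn => Hnd.
have Hw : forall w, ~ domv S w.
  move=> w [wS Hw]; move/negP: (Hnd w wS); apply; apply/forall_inP => u uS; apply/implyP; exact: Hw.
have g2 := gamma_ge2 S0 Hw.
have HA := split_co_big HXs Hw.
have HB := split_co_big (split_co_sym HXs) Hw.
case: (leqP #|S :\: X| 2) => HB2.
  apply: leq_trans g2; apply: leq_trans HB2; exact: gamma_cer_le (certB HXs HA).
case: (leqP #|X| 2) => HA2.
  apply: leq_trans g2; apply: leq_trans HA2.
  apply: leq_trans (gamma_cer_le (certB (split_co_sym HXs) HB)) _.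
  apply: subset_leq_card; apply/subsetP => u; rewrite !inE.
  by case: (u \in X); case: (u \in S).
have [D [HD HD2]] := certAB HXs HA2 HB2.
by apply: leq_trans g2; apply: leq_trans HD2; apply: gamma_cer_le.
Qed.


Section Four.
Variables (a b c d : T) (S D : {set T}).
Hypothesis Smem : forall u, (u \in S) = [|| u == a, u == b, u == c | u == d].
Hypotheses (ab : e a b) (bc : e b c) (cd : e c d).
Hypotheses (nac : ~~ e a c) (nad : ~~ e a d) (nbd : ~~ e b d).
Hypothesis HD : certified_dominating e S D.

Lemma cert_one x y : x \in D -> [set w in S :\: D | e x w] = [set y] -> False.
Proof.
move=> xD E; case/andP: HD => _ /forall_inP /(_ x xD).
by rewrite /ndeg E cards1.
Qed.

Lemma half1 : b \in D.
Proof.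
case/andP: (HD) => /andP[DS /forall_inP Hdom] _.
apply: contraT => bD.
case: (boolP (a \in D)) => aD.
  exfalso; apply: (@cert_one a b aD); apply/setP => w; rewrite !inE Smem.
  case: (eqVneq w b) => [->|wb] /=; first by rewrite ?(negbTE bD) ?eqxx ?orbT ?ab.
  apply/negbTE; apply/negP; case/andP => /andP[_ Hw] aw.
  by case/or3P: Hw => /eqP wE; move: aw; rewrite wE ?e_irr ?(negbTE nac) ?(negbTE nad).
have aS : a \in S by rewrite Smem eqxx.
have aSD : a \in S :\: D by rewrite inE aD aS.
case/exists_inP: (Hdom a aSD) => u uD au; have := subsetP DS u uD; rewrite Smem.
by case/or4P => /eqP uE; move: au uD; rewrite uE ?e_irr ?(negbTE nac) ?(negbTE nad) ?(negbTE bD).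
Qed.

Lemma half2 : b \in D -> c \in D -> a \in D.
Proof.
move=> bD cD; apply: contraT => aD; exfalso; apply: (@cert_one b a bD).
apply/setP => w; rewrite !inE Smem.
case: (eqVneq w a) => [->|wa]; first by rewrite aD /= e_sym ab.
apply/negP; case/andP => /andP[wD Hw] bw.
by case/or4P: Hw => [//|/eqP wE|/eqP wE|/eqP wE]; move: wD bw; rewrite wE ?cD ?e_irr ?(negbTE nbd).
Qed.

End Four.


Lemma not_perfect (a b c d : T) : uniq [:: a; b; c; d] ->
  e a b -> e b c -> e c d -> ~~ e a c -> ~~ e a d -> ~~ e b d ->
  ~ gamma_gammacer_perfect e.
Proof.
move=> Hu ab bc cd nac nad nbd HP.
set S := [set a; b; c; d].
have Smem : forall u, (u \in S) = [|| u == a, u == b, u == c | u == d].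
  by move=> u; rewrite !inE -!orbA.
have Smem' : forall u, (u \in S) = [|| u == d, u == c, u == b | u == a].
  by move=> u; rewrite Smem; case: (u == a); case: (u == b); case: (u == c); case: (u == d).
have cardS : #|S| = 4.
  have -> : #|S| = #|[:: a; b; c; d]| by apply: eq_card => u; rewrite Smem !inE.
  by move/card_uniqP: Hu.
have aS : a \in S by rewrite Smem eqxx.
have bS : b \in S by rewrite Smem eqxx orbT.
have cS : c \in S by rewrite Smem eqxx !orbT.
have dS : d \in S by rewrite Smem eqxx !orbT.
pose r := fun x y => [&& x \in S, y \in S & e x y].
have rsym : symmetric r by move=> x y; rewrite /r e_sym andbCA.
have ca : forall x, x \in S -> connect r a x.
  have rab : connect r a b by apply: connect1; rewrite /r aS bS ab.
  have rbc : connect r b c by apply: connect1; rewrite /r bS cS bc.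
  have rcd : connect r c d by apply: connect1; rewrite /r cS dS cd.
  move=> x; rewrite Smem; case/or4P => /eqP->.
  - exact: connect0.
  - exact: rab.
  - exact: connect_trans rab rbc.
  - exact: connect_trans (connect_trans rab rbc) rcd.
have Hconn : induced_connected e S.
  split; first by apply/set0Pn; exists a.
  move=> x y xS yS; apply: connect_trans (ca y yS).
  by rewrite (sym_connect_sym rsym); apply: ca.
have NK2 : ~ is_K2 e S.
  case=> x [y [_ E _]]; have := cards2 x y; rewrite -E cardS.
  by case: (x != y).
have := HP S Hconn NK2.
have g2 : gamma e S <= 2.
  have HDom : dominating e S [set b; c].
    apply/andP; split; first by rewrite subUset !sub1set bS cS.
    apply/forall_inP => x; rewrite in_setD => /andP[Hx xS]; rewrite !inE in Hx.
    move: xS; rewrite Smem; case/or4P => /eqP xE; rewrite xE ?eqxx ?orbT in Hx *.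
    - by apply/exists_inP; exists b; rewrite ?inE ?eqxx.
    - by [].
    - by [].
    - by apply/exists_inP; exists c; rewrite ?inE ?eqxx ?orbT // e_sym.
  by apply: leq_trans (gamma_le HDom) _; rewrite cards2; case: (b != c).
have g3 : 2 < gamma_cer e S.
  have [D [HD <-]] := gamma_cer_spec S.
  have dc : e d c by rewrite e_sym.
  have ndb : ~~ e d b by rewrite e_sym.
  have nda : ~~ e d a by rewrite e_sym.
  have nca : ~~ e c a by rewrite e_sym.
  have bD := half1 Smem ab nac nad HD.
  have cD := half1 Smem' dc ndb nda HD.
  have aD := half2 Smem ab nbd HD bD cD.
  have dD := half2 Smem' dc nca HD cD bD.
  have SD : S \subset D by apply/subsetP => x; rewrite Smem; case/or4P => /eqP->.
  by have := subset_leq_card SD; rewrite cardS; apply: leq_trans.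
by move=> Heq; move: g2; rewrite Heq leqNgt g3.
Qed.

End Proofs.

Theorem corollary2p8 (T : finType) (e : rel T)
  (e_sym : symmetric e) (e_irr : irreflexive e) :
  gamma_gammacer_perfect e <-> P4_free e.
Proof.
split.
  move=> HP [a [b [c [d [Hu /and3P[ab bc cd] /and3P[nac nad nbd]]]]]].
  exact: (not_perfect e_sym e_irr Hu ab bc cd nac nad nbd HP).
move=> H4; apply: (perfect_of e_sym) => a b c d ab bc cd nac nad nbd.
apply: H4; exists a, b, c, d; split; last by rewrite nac nad nbd.
  have nab : a != b by apply/eqP => E; move: ab; rewrite E e_irr.
  have nbc : b != c by apply/eqP => E; move: bc; rewrite E e_irr.
  have ncd : c != d by apply/eqP => E; move: cd; rewrite E e_irr.
  have nac' : a != c by apply/eqP => E; move: nad; rewrite E cd.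
  have nad' : a != d by apply/eqP => E; move: nac; rewrite E e_sym cd.
  have nbd' : b != d by apply/eqP => E; move: nad; rewrite -E ab.
  by rewrite /= !inE !negb_or nab nac' nad' nbc nbd' ncd.
by rewrite ab bc cd.
Qed.
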